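(* For every Cantor set $C\subset\mathbb{R}$ and every $\varepsilon\in(0,1)$, $$(1-\varepsilon)^2\le\frac{\tau_\varepsilon(C)}{\tau(C)}\le 1 .$$ In particular $\lim_{\varepsilon\to0}\tau_\varepsilon(C)=\tau(C)$.
   Context: A Cantor set is a non-empty compact, perfect, totally disconnected subset of $\mathbb{R}$; its gaps are the bounded connected components of its complement. For $\varepsilon\ge0$ and $u$ the right endpoint of a gap $G$ of a Cantor set $K$, the $\varepsilon$-bridge is $B_\varepsilon(u)=(u,\ell(\widetilde G))$, where $\widetilde G$ is the gap of $K$ to the right of $u$ with $|\widetilde G|\ge(1-\varepsilon)|G|$ such that every gap $\widehat G\subset(u,\ell(\widetilde G))$ satisfies $|\widehat G|<(1-\varepsilon)|G|$, and $\ell(\widetilde G)$ is the left endpoint of $\widetilde G$ (if no such gap exists, the bridge extends to $\max K$); $\varepsilon$-bridges at left endpoints of gaps are defined symmetrically. The $\varepsilon$-thickness is $\tau_\varepsilon(K)=\inf_u|B_\varepsilon(u)|/|G|$, the infimum over all gap endpoints $u$, and $\tau(K)=\tau_0(K)$ is the Newhouse thickness. *)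

(* Defs.v *)
From HB Require Import structures.
From mathcomp Require Import all_boot all_order all_algebra.
From mathcomp Require Import all_classical all_reals all_analysis.
Set Implicit Arguments. Unset Strict Implicit. Unset Printing Implicit Defensive.
Import Order.TTheory GRing.Theory Num.Theory.
Import numFieldNormedType.Exports.
Local Open Scope classical_set_scope.
Local Open Scope ring_scope.

Section Thickness.
Variable R : realType.
Implicit Types (K G H : set R) (eps u v : R).

Definition cantor_set K :=
  [/\ K !=set0, compact K, perfect_set K & totally_disconnected K].

Definition is_gap K G :=
  bounded_set G /\ exists x, (~` K) x /\ G = connected_component (~` K) x.

Definition lgap G := inf G.
Definition rgap G := sup G.
Definition glen G := sup G - inf G.

(* [rbridge_end K eps G v]: v is the right end of the eps-bridge B_eps(u)
   at the right endpoint u = rgap G of the gap G, i.e. B_eps(u) = (u, v). *)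
Definition rbridge_cond K eps G H :=
  [/\ is_gap K H, H `<=` [set x | rgap G < x],
      (1 - eps) * glen G <= glen H &
      forall H', is_gap K H' -> H' `<=` [set x | rgap G < x < lgap H] ->
        glen H' < (1 - eps) * glen G].

Definition rbridge_end K eps G v :=
  (exists H, rbridge_cond K eps G H /\ v = lgap H) \/
  ((~ exists H, rbridge_cond K eps G H) /\ v = sup K).

(* symmetric: eps-bridge B_eps(u) = (v, u) at the left endpoint u = lgap G *)
Definition lbridge_cond K eps G H :=
  [/\ is_gap K H, H `<=` [set x | x < lgap G],
      (1 - eps) * glen G <= glen H &
      forall H', is_gap K H' -> H' `<=` [set x | rgap H < x < lgap G] ->
        glen H' < (1 - eps) * glen G].

Definition lbridge_end K eps G v :=
  (exists H, lbridge_cond K eps G H /\ v = rgap H) \/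
  ((~ exists H, lbridge_cond K eps G H) /\ v = inf K).

Definition bridge_ratios K eps : set R :=
  [set r | exists G v, is_gap K G /\
     ((rbridge_end K eps G v /\ r = (v - rgap G) / glen G) \/
      (lbridge_end K eps G v /\ r = (lgap G - v) / glen G))].

(* eps-thickness; thickness K 0 is the Newhouse thickness *)
Definition thickness K eps : R := inf (bridge_ratios K eps).

End Thickness.

(* Main.v *)
Require Import Defs.
From HB Require Import structures.
From mathcomp Require Import all_boot all_order all_algebra.
From mathcomp Require Import all_classical all_reals all_analysis.
Import Order.TTheory GRing.Theory Num.Theory.
Import numFieldNormedType.Exports.
Local Open Scope classical_set_scope.
Local Open Scope ring_scope.
From mathcomp Require Import lra.
Section S.
Variable R : realType.
Lemma bounded_ex (G : set R) : bounded_set G -> exists M : R, forall y, G y -> `|y| <= M.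
Proof.
move=> [M [_ HM]]; exists (M + 1) => y Gy.
by apply: (HM (M+1)); [rewrite ltrDl | ].
Qed.

Lemma open_ball {A : set R} {x} : open A -> A x -> exists2 e : R, 0 < e & forall y, `|x - y| < e -> A y.
Proof.
move=> oA Ax; have := oA x Ax; move=> /nbhs_ballP [e e0 He].
exists e => // y Hy; apply: He; by rewrite -ball_normE /=.
Qed.

Lemma gap_struct {K G : set R} : closed K -> is_gap K G ->
  [/\ G `<=` ~` K, K (lgap G), K (rgap G), lgap G < rgap G &
      forall y, G y <-> lgap G < y < rgap G].
Proof.
move=> cK [bG [x [nKx EG]]]; subst G.
set G := connected_component _ _.
have GK : G `<=` ~` K by apply: connected_component_sub.
have Gx : G x by apply: connected_component_refl.
have iG : is_interval G by apply/connected_intervalP/component_connected.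
have [M HM] := bounded_ex G bG.
have G0 : G !=set0 by exists x.
have hs : has_sup G by split => //; exists M => y /HM /ler_normlP [].
have hl : has_lbound G.
  by exists (- M) => y /HM /ler_normlP []; rewrite lerNl.
have oK : open (~` K) by apply: closed_openC.
have xb : x <= sup G by apply: sup_upper_bound.
have ax : inf G <= x by exact: ge_inf hl _ Gx.
have Kb : K (sup G).
  apply: contrapT => nKb.
  have [e e0 He] := open_ball oK nKb.
  have sub : [set` `[x, sup G + e / 2]] `<=` G.
    apply: connected_component_max.
    - by rewrite /= in_itv /= lexx /= (le_trans xb) // lerDl divr_ge0 // ltW.
    - move=> y; rewrite /= in_itv /= => /andP [xy ye].
      have [yb|by_] := ltP y (sup G).
        have [g Gg yg] := sup_gt G0 yb.
        by apply: GK; apply: (iG x g) => //; rewrite xy ltW.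
      apply: He; rewrite ler0_norm ?subr_le0 // opprB.
      by rewrite ltrBlDl (le_lt_trans ye) // ltrD2l ltr_pdivrMr // ltr_pMr // ltr1n.
    - by apply/connected_intervalP/interval_is_interval.
  have : G (sup G + e / 2).
    by apply: sub; rewrite /= in_itv /= lexx (le_trans xb) // lerDl divr_ge0 // ltW.
  move=> /(sup_upper_bound hs) H; have e2 : 0 < e / 2 by rewrite divr_gt0.
  lra.
have Ka : K (inf G).
  apply: contrapT => nKa.
  have [e e0 He] := open_ball oK nKa.
  have e2 : 0 < e / 2 by rewrite divr_gt0.
  have sub : [set` `[inf G - e / 2, x]] `<=` G.
    apply: connected_component_max.
    - by rewrite /= in_itv /=; apply/andP; split; lra.
    - move=> y; rewrite /= in_itv /= => /andP [ey yx].
      have [ay|ya] := ltP (inf G) y.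
        have [g Gg gy] := inf_lt G0 ay.
        by apply: GK; apply: (iG g x) => //; rewrite yx ltW.
      apply: He; rewrite ger0_norm ?subr_ge0 //; lra.
    - by apply/connected_intervalP/interval_is_interval.
  have : G (inf G - e / 2).
    by apply: sub; rewrite /= in_itv /=; apply/andP; split; lra.
  move=> /(ge_inf hl) H; lra.
have ax' : inf G < x by rewrite lt_neqAle ax andbT; apply/eqP => E; apply: nKx; rewrite -E.
have xb' : x < sup G by rewrite lt_neqAle xb andbT; apply/eqP => E; apply: nKx; rewrite E.
split => //; first exact: lt_trans xb'.
move=> y; split.
  move=> Gy; have := GK _ Gy => nKy.
  have := sup_upper_bound hs Gy; have := ge_inf hl Gy.
  rewrite !le_eqVlt => /predU1P [E|->] /predU1P [E'|->] //.
  - by exfalso; apply: nKy; rewrite -E.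
  - by exfalso; apply: nKy; rewrite -E.
  - by exfalso; apply: nKy; rewrite E'.
move=> /andP [ay yb].
have [g1 Gg1 g1y] := inf_lt G0 ay.
have [g2 Gg2 g2y] := sup_gt G0 yb.
by apply: (iG g1 g2) => //; rewrite !ltW.
Qed.

Section Bridges.
Variables (K : set R).
Hypothesis cK : closed K.

Lemma gap_ne {G} : is_gap K G -> G !=set0.
Proof.
move=> /(gap_struct cK) [_ _ _ lr HG]; exists ((lgap G + rgap G) / 2).
apply/HG; apply/andP; split; lra.
Qed.

Lemma gap_lb {G u} : is_gap K G -> G `<=` [set x | u < x] -> u <= lgap G.
Proof.
move=> gG sG; apply: lb_le_inf; first exact: gap_ne.
by move=> y /sG /= /ltW.
Qed.

Lemma gap_ub {G u} : is_gap K G -> G `<=` [set x | x < u] -> rgap G <= u.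
Proof.
move=> gG sG; apply: ge_sup; first exact: gap_ne.
by move=> y /sG /= /ltW.
Qed.

Lemma gap_len {G} : is_gap K G -> 0 < glen G.
Proof. by move=> /(gap_struct cK) [_ _ _ lr _]; rewrite /glen subr_gt0. Qed.

Lemma gap_order {H1 H2} : is_gap K H1 -> is_gap K H2 ->
  lgap H1 < lgap H2 -> rgap H1 <= lgap H2.
Proof.
move=> /(gap_struct cK) [s1 _ _ _ E1] /(gap_struct cK) [_ K2 _ _ _] lt.
rewrite leNgt; apply/negP => lt2.
by apply: (s1 (lgap H2)) => //; apply/E1; rewrite lt lt2.
Qed.

Lemma gap_order' {H1 H2} : is_gap K H1 -> is_gap K H2 ->
  rgap H1 < rgap H2 -> rgap H1 <= lgap H2.
Proof.
move=> /(gap_struct cK) [_ _ K1 _ _] /(gap_struct cK) [s2 _ _ _ E2] lt.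
rewrite leNgt; apply/negP => lt2.
by apply: (s2 (rgap H1)) => //; apply/E2; rewrite lt lt2.
Qed.

Lemma r_exist u c : 0 < c ->
  (exists H0, [/\ is_gap K H0, H0 `<=` [set x | u < x] & c <= glen H0]) ->
  exists H, [/\ is_gap K H, H `<=` [set x | u < x], c <= glen H &
    forall H', is_gap K H' -> H' `<=` [set x | u < x < lgap H] -> glen H' < c].
Proof.
move=> c0 [H0 [g0 s0 l0]].
pose S := [set l | exists H, [/\ is_gap K H, H `<=` [set x | u < x], c <= glen H & l = lgap H]].
have S0 : S !=set0 by exists (lgap H0), H0.
have Slb : lbound S u by move=> l [H [gH sH _ ->]]; exact: gap_lb.
have hl : has_lbound S by exists u.
have Sm : S (inf S).
  apply: contrapT => nSm.
  have lt0 : inf S < inf S + c by rewrite ltrDl.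
  have [l1 [H1 [g1 s1 c1 E1]] lt1] := inf_lt S0 lt0.
  have m1 : inf S < l1.
    rewrite lt_neqAle (ge_inf hl) ?andbT; last by exists H1.
    by apply/eqP => E; apply: nSm; rewrite E; exists H1.
  have [l2 [H2 [g2 s2 c2 E2]] lt2] := inf_lt S0 m1.
  have m2 : inf S <= l2 by apply: (ge_inf hl); exists H2.
  have [sK2 _ _ _ HH2] := gap_struct cK g2.
  have [_ KH1 _ _ _] := gap_struct cK g1.
  apply: (sK2 l1); last by rewrite E1.
  apply/HH2; move: c2 E2; rewrite /glen /lgap /rgap => c2 E2.
  apply/andP; split; lra.
case: Sm => H [gH sH cH EH]; exists H; split => // H' gH' sH'.
rewrite ltNge; apply/negP => cH'.
have : S (lgap H') by exists H'; split => // y /sH' /andP [].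
move=> /(ge_inf hl); rewrite EH => le.
have [y Hy] := gap_ne gH'.
have [_ _ _ _ HH'] := gap_struct cK gH'.
have /HH' /andP [ly _] := Hy.
have /sH' /andP [_ yl] := Hy.
lra.
Qed.

Lemma l_exist u c : 0 < c ->
  (exists H0, [/\ is_gap K H0, H0 `<=` [set x | x < u] & c <= glen H0]) ->
  exists H, [/\ is_gap K H, H `<=` [set x | x < u], c <= glen H &
    forall H', is_gap K H' -> H' `<=` [set x | rgap H < x < u] -> glen H' < c].
Proof.
move=> c0 [H0 [g0 s0 l0]].
pose S := [set l | exists H, [/\ is_gap K H, H `<=` [set x | x < u], c <= glen H & l = rgap H]].
have S0 : S !=set0 by exists (rgap H0), H0.
have Sub : ubound S u by move=> l [H [gH sH _ ->]]; exact: gap_ub.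
have hu : has_ubound S by exists u.
have hs : has_sup S by split.
have Sm : S (sup S).
  apply: contrapT => nSm.
  have lt0 : sup S - c < sup S by rewrite gtrBl.
  have [l1 [H1 [g1 s1 c1 E1]] lt1] := sup_gt S0 lt0.
  have m1 : l1 < sup S.
    rewrite lt_neqAle (sup_upper_bound hs) ?andbT; last by exists H1.
    by apply/eqP => E; apply: nSm; rewrite -E; exists H1.
  have [l2 [H2 [g2 s2 c2 E2]] lt2] := sup_gt S0 m1.
  have m2 : l2 <= sup S by apply: (sup_upper_bound hs); exists H2.
  have [sK2 _ _ _ HH2] := gap_struct cK g2.
  have [_ _ KH1 _ _] := gap_struct cK g1.
  apply: (sK2 l1); last by rewrite E1.
  apply/HH2; move: c2 E2; rewrite /glen /lgap /rgap => c2 E2.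
  apply/andP; split; lra.
case: Sm => H [gH sH cH EH]; exists H; split => // H' gH' sH'.
rewrite ltNge; apply/negP => cH'.
have : S (rgap H') by exists H'; split => // y /sH' /andP [].
move=> /(sup_upper_bound hs); rewrite EH => le.
have [y Hy] := gap_ne gH'.
have [_ _ _ _ HH'] := gap_struct cK gH'.
have /HH' /andP [_ yr] := Hy.
have /sH' /andP [ry _] := Hy.
lra.
Qed.


Hypothesis hub : has_ubound K.
Hypothesis hlb : has_lbound K.

Lemma ratio_ge0 e r : bridge_ratios K e r -> 0 <= r.
Proof.
move=> [G [v [gG [[rb ->]|[lb ->]]]]]; apply: divr_ge0; try exact/ltW/gap_len.
- case: rb => [[H [[gH sH _ _] ->]] | [_ ->]]; rewrite subr_ge0.
    exact: gap_lb.
  have [_ _ KG _ _] := gap_struct cK gG.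
  exact: ub_le_sup.
- case: lb => [[H [[gH sH _ _] ->]] | [_ ->]]; rewrite subr_ge0.
    exact: gap_ub.
  have [_ KG _ _ _] := gap_struct cK gG.
  exact: ge_inf.
Qed.

Lemma thick_le e r : bridge_ratios K e r -> thickness K e <= r.
Proof. by move=> Hr; apply: ge_inf => //; exists 0 => x /ratio_ge0. Qed.

Lemma ratios_ne e1 e2 : bridge_ratios K e1 !=set0 -> bridge_ratios K e2 !=set0.
Proof.
move=> [r [G [v [gG _]]]].
case: (pselect (exists H, rbridge_cond K e2 G H)) => [[H cH]|nH].
  by eexists; exists G, (lgap H); split => //; left; split => //; left; exists H.
by eexists; exists G, (sup K); split => //; left; split => //; right.
Qed.

Lemma thick_ge0 e : 0 <= thickness K e.
Proof.
case: (pselect (bridge_ratios K e !=set0)) => [ne|e0].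
  by apply: lb_le_inf ne _ => r /ratio_ge0.
rewrite /thickness (_ : bridge_ratios K e = set0) ?inf0 //.
by apply/seteqP; split => // x Hx; apply: e0; exists x.
Qed.

Lemma ratio_lower eps r : 0 < eps < 1 -> bridge_ratios K eps r ->
  (1 - eps) * thickness K 0 <= r.
Proof.
move=> /andP [e0 e1] [G [v [gG Hr]]].
have gl := gap_len gG; set t := thickness K 0.
have t0 : 0 <= t := thick_ge0 0.
have c0 : 0 < (1 - eps) * glen G by rewrite mulr_gt0 // subr_gt0.
have cle : (1 - eps) * glen G <= glen G by apply: ler_piMl; [exact: ltW | lra].
have tle : (1 - eps) * t <= t by apply: ler_piMl; [exact: t0 | lra].
case: Hr => [[rb ->]|[lb ->]].
- case: rb => [[H [[gH sH cH allH] ->]] | [nH ->]].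
  + case: (leP (glen G) (glen H)) => GH.
    * have : bridge_ratios K 0 ((lgap H - rgap G) / glen G).
        exists G, (lgap H); split => //; left; split => //; left; exists H.
        split => //; split => //; first by rewrite subr0 mul1r.
        move=> H' g' s'; rewrite subr0 mul1r.
        exact: lt_le_trans (allH _ g' s') cle.
      move=> /thick_le; rewrite -/t => tr; exact: le_trans tle tr.
    * have : bridge_ratios K 0 ((lgap H - rgap G) / glen H).
        exists H, (rgap G); split => //; right; split => //; left; exists G.
        split => //; split => //.
        - move=> y Gy /=; have [_ _ _ _ HG] := gap_struct cK gG.
          have := gap_lb gH sH; have /HG /andP [_ ?] := Gy; lra.
        - by rewrite subr0 mul1r ltW.
        - move=> H' g' s'; rewrite subr0 mul1r.
          exact: lt_le_trans (allH _ g' s') cH.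
      move=> /thick_le; rewrite -/t ler_pdivlMr ?gap_len // => tr.
      rewrite ler_pdivlMr //.
      have := gap_lb gH sH => ?.
      nra.
  + have : bridge_ratios K 0 ((sup K - rgap G) / glen G).
      exists G, (sup K); split => //; left; split => //; right; split => //.
      move=> [H0 [gH0 sH0 cH0 _]]; apply: nH.
      have [|H [gH sH cH allH]] := r_exist (rgap G) _ c0.
        exists H0; split => //; apply: le_trans cle _; by rewrite subr0 mul1r in cH0.
      by exists H; split.
    move=> /thick_le; rewrite -/t => tr; exact: le_trans tle tr.
- case: lb => [[H [[gH sH cH allH] ->]] | [nH ->]].
  + case: (leP (glen G) (glen H)) => GH.
    * have : bridge_ratios K 0 ((lgap G - rgap H) / glen G).
        exists G, (rgap H); split => //; right; split => //; left; exists H.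
        split => //; split => //; first by rewrite subr0 mul1r.
        move=> H' g' s'; rewrite subr0 mul1r.
        exact: lt_le_trans (allH _ g' s') cle.
      move=> /thick_le; rewrite -/t => tr; exact: le_trans tle tr.
    * have : bridge_ratios K 0 ((lgap G - rgap H) / glen H).
        exists H, (lgap G); split => //; left; split => //; left; exists G.
        split => //; split => //.
        - move=> y Gy /=; have [_ _ _ _ HG] := gap_struct cK gG.
          have := gap_ub gH sH; have /HG /andP [? _] := Gy; lra.
        - by rewrite subr0 mul1r ltW.
        - move=> H' g' s'; rewrite subr0 mul1r.
          exact: lt_le_trans (allH _ g' s') cH.
      move=> /thick_le; rewrite -/t ler_pdivlMr ?gap_len // => tr.
      rewrite ler_pdivlMr //.
      have := gap_ub gH sH => ?.
      nra.
  + have : bridge_ratios K 0 ((lgap G - inf K) / glen G).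
      exists G, (inf K); split => //; right; split => //; right; split => //.
      move=> [H0 [gH0 sH0 cH0 _]]; apply: nH.
      have [|H [gH sH cH allH]] := l_exist (lgap G) _ c0.
        exists H0; split => //; apply: le_trans cle _; by rewrite subr0 mul1r in cH0.
      by exists H; split.
    move=> /thick_le; rewrite -/t => tr; exact: le_trans tle tr.
Qed.


Lemma ratio_upper eps r : 0 < eps < 1 -> bridge_ratios K 0 r ->
  exists2 r', bridge_ratios K eps r' & r' <= r.
Proof.
move=> /andP [e0 e1] [G [v [gG Hr]]].
have gl := gap_len gG.
have c0 : 0 < (1 - eps) * glen G by rewrite mulr_gt0 // subr_gt0.
have cle : (1 - eps) * glen G <= glen G by apply: ler_piMl; [exact: ltW | lra].
have [sG KlG KrG _ HG] := gap_struct cK gG.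
case: Hr => [[rb ->]|[lb ->]].
- case: (pselect (exists H, rbridge_cond K eps G H)) => [[H' cH']|nH'].
  + exists ((lgap H' - rgap G) / glen G).
      by exists G, (lgap H'); split => //; left; split => //; left; exists H'.
    apply: ler_wpM2r; first by rewrite invr_ge0 ltW.
    rewrite lerD2r.
    case: cH' => gH' sH' cH'' aH'.
    have [_ KlH' _ _ _] := gap_struct cK gH'.
    case: rb => [[H0 [[g0 s0 c0' a0] ->]] | [_ ->]]; last exact: ub_le_sup.
    rewrite leNgt; apply/negP => lt.
    have ord := gap_order g0 gH' lt.
    have [_ _ _ _ HH0] := gap_struct cK g0.
    have : glen H0 < (1 - eps) * glen G.
      apply: aH' => // y H0y; apply/andP; split; first exact: s0.
      by have /HH0 /andP [_ ?] := H0y; lra.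
    rewrite subr0 mul1r in c0'; lra.
  + exists ((sup K - rgap G) / glen G).
      by exists G, (sup K); split => //; left; split => //; right.
    case: rb => [[H0 [[g0 s0 c0' a0] ->]] | [_ ->]] //.
    exfalso; apply: nH'.
    have [|H [gH sH cH allH]] := r_exist (rgap G) _ c0.
      exists H0; split => //; apply: le_trans cle _; by rewrite subr0 mul1r in c0'.
    by exists H; split.
- case: (pselect (exists H, lbridge_cond K eps G H)) => [[H' cH']|nH'].
  + exists ((lgap G - rgap H') / glen G).
      by exists G, (rgap H'); split => //; right; split => //; left; exists H'.
    apply: ler_wpM2r; first by rewrite invr_ge0 ltW.
    rewrite lerD2l lerN2.
    case: cH' => gH' sH' cH'' aH'.
    have [_ _ KrH' _ _] := gap_struct cK gH'.
    case: lb => [[H0 [[g0 s0 c0' a0] ->]] | [_ ->]]; last exact: ge_inf.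
    rewrite leNgt; apply/negP => lt.
    have ord := gap_order' gH' g0 lt.
    have [_ _ _ _ HH0] := gap_struct cK g0.
    have : glen H0 < (1 - eps) * glen G.
      apply: aH' => // y H0y; apply/andP; split; last exact: s0.
      by have /HH0 /andP [? _] := H0y; lra.
    rewrite subr0 mul1r in c0'; lra.
  + exists ((lgap G - inf K) / glen G).
      by exists G, (inf K); split => //; right; split => //; right.
    case: lb => [[H0 [[g0 s0 c0' a0] ->]] | [_ ->]] //.
    exfalso; apply: nH'.
    have [|H [gH sH cH allH]] := l_exist (lgap G) _ c0.
      exists H0; split => //; apply: le_trans cle _; by rewrite subr0 mul1r in c0'.
    by exists H; split.
Qed.

Lemma thick_upper eps : 0 < eps < 1 -> thickness K eps <= thickness K 0.
Proof.
move=> ep.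
case: (pselect (bridge_ratios K 0 !=set0)) => [ne|e0].
  apply: lb_le_inf ne _ => r /(ratio_upper _ _ ep) [r' Hr' le].
  exact: le_trans (thick_le _ _ Hr') le.
have e1 : ~ (bridge_ratios K eps !=set0) by move=> /(ratios_ne _ 0).
rewrite /thickness (_ : bridge_ratios K 0 = set0).
  rewrite (_ : bridge_ratios K eps = set0) ?inf0 //.
  by apply/seteqP; split => // x Hx; apply: e1; exists x.
by apply/seteqP; split => // x Hx; apply: e0; exists x.
Qed.

Lemma thick_lower eps : 0 < eps < 1 -> (1 - eps) * thickness K 0 <= thickness K eps.
Proof.
move=> ep.
case: (pselect (bridge_ratios K eps !=set0)) => [ne|e0].
  by apply: lb_le_inf ne _ => r /(ratio_lower _ _ ep).
have e1 : ~ (bridge_ratios K 0 !=set0) by move=> /(ratios_ne _ eps).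
rewrite /thickness (_ : bridge_ratios K 0 = set0).
  rewrite (_ : bridge_ratios K eps = set0) ?inf0 ?mulr0 //.
  by apply/seteqP; split => // x Hx; apply: e0; exists x.
by apply/seteqP; split => // x Hx; apply: e1; exists x.
Qed.

End Bridges.
End S.

Theorem mainTheorem13 (R : realType) (C : set R) :
  cantor_set C ->
  (forall eps : R, 0 < eps < 1 ->
     (1 - eps) ^+ 2 * thickness C 0 <= thickness C eps /\
     thickness C eps <= thickness C 0) /\
  (thickness C eps @[eps --> 0^'+] --> thickness C 0).
Proof.
move=> [_ cC _ _].
have clC : closed C := compact_closed (@Rhausdorff R) cC.
have [M HM] := @bounded_ex R C (compact_bounded cC).
have hub : has_ubound C by exists M => y /HM /ler_normlP [].
have hlb : has_lbound C by exists (- M) => y /HM /ler_normlP []; rewrite lerNl.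
have t0 := @thick_ge0 R C clC hub hlb 0.
have key : forall eps : R, 0 < eps < 1 ->
     (1 - eps) * thickness C 0 <= thickness C eps /\
     thickness C eps <= thickness C 0.
  by move=> eps ep; split; [exact: thick_lower | exact: thick_upper].
split.
  move=> eps ep; have [k1 k2] := key eps ep; split => //.
  move: ep => /andP [e0 e1].
  have : (1 - eps) ^+ 2 * thickness C 0 <= (1 - eps) * thickness C 0.
    rewrite expr2; nra.
  move=> h; exact: le_trans h k1.
apply/cvgrPdist_le => e e0.
set T := thickness C 0.
have Tp : 0 < T + 1 by lra.
near=> t.
have tp : 0 < t by near: t; exact: nbhs_right_gt.
have t1 : t < 1 by near: t; exact: nbhs_right_lt.
have t2 : t < e / (T + 1) by near: t; apply: nbhs_right_lt; exact: divr_gt0.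
have [k1 k2] : (1 - t) * T <= thickness C t /\ thickness C t <= T by apply: key; rewrite tp t1.
rewrite ger0_norm ?subr_ge0 //.
move: t2; rewrite ltr_pdivlMr // => t2.
nra.
Unshelve. all: by end_near.
Qed.
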